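(* Let $R$ be a simple ring, $\delta$ a derivation of $R$, and $S=R[x;\delta]$ the differential polynomial ring. If $S$ is left quasi-duo or right quasi-duo, then $R$ is a field and $\delta=0$.
   Context: All rings are unital and associative. A derivation of $R$ is an additive map $\delta:R\to R$ with $\delta(rs)=r\delta(s)+\delta(r)s$. The differential polynomial ring $R[x;\delta]$ is, as a left $R$-module, the polynomial ring $R[x]$, with multiplication determined by $xr=rx+\delta(r)$ for $r\in R$. A ring is left (right) quasi-duo if every maximal left (right) ideal is two-sided. *)

(* Defs.v *)
From HB Require Import structures.
From mathcomp Require Import all_boot all_order all_algebra.
Set Implicit Arguments. Unset Strict Implicit. Unset Printing Implicit Defensive.
Import GRing.Theory.
Local Open Scope ring_scope.

Section Ideals.
Variables (T : zmodType) (mul : T -> T -> T).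

Definition additive_subgroup (I : T -> Prop) :=
  [/\ I 0, forall a b, I a -> I b -> I (a + b) & forall a, I a -> I (- a)].

Definition left_ideal (I : T -> Prop) :=
  additive_subgroup I /\ forall s a, I a -> I (mul s a).

Definition right_ideal (I : T -> Prop) :=
  additive_subgroup I /\ forall s a, I a -> I (mul a s).

Definition two_sided_ideal (I : T -> Prop) := left_ideal I /\ right_ideal I.

Definition proper (I : T -> Prop) := exists t, ~ I t.

Definition maximal_left_ideal (I : T -> Prop) :=
  [/\ left_ideal I, proper I &
      forall J, left_ideal J -> (forall t, I t -> J t) ->
        (forall t, J t -> I t) \/ (forall t, J t)].

Definition maximal_right_ideal (I : T -> Prop) :=
  [/\ right_ideal I, proper I &
      forall J, right_ideal J -> (forall t, I t -> J t) ->
        (forall t, J t -> I t) \/ (forall t, J t)].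

Definition left_quasi_duo :=
  forall I, maximal_left_ideal I -> right_ideal I.
Definition right_quasi_duo :=
  forall I, maximal_right_ideal I -> left_ideal I.
End Ideals.

Definition simple_ring (R : nzRingType) :=
  forall I : R -> Prop, two_sided_ideal *%R I ->
    (forall x, I x -> x = 0) \/ (forall x, I x).

Definition derivation (R : nzRingType) (d : R -> R) :=
  (forall a b, d (a + b) = d a + d b) /\ (forall a b, d (a * b) = a * d b + d a * b).

Definition is_field (R : nzRingType) :=
  (forall a b : R, a * b = b * a) /\
  (forall a : R, a != 0 -> exists b, a * b = 1 /\ b * a = 1).

(* Multiplication of the differential polynomial ring R[x; d].
   Its carrier is {poly R} viewed as the left R-module with basis x^i
   (p = \sum_i p`_i x^i, coefficients on the left); the product is
   determined by x r = r x + d r, which gives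
   (a x^i)(b x^j) = \sum_(k <= i) 'C(i,k) a d^k(b) x^(i+j-k). *)
Definition dmul (R : nzRingType) (d : R -> R) (p q : {poly R}) : {poly R} :=
  \sum_(i < size p) \sum_(j < size q) \sum_(k < i.+1)
     ((p`_i * iter k d q`_j) *+ 'C(i, k)) *: 'X^(i + j - k).

(* Main.v *)
Require Import Defs.
From mathcomp Require Import all_boot all_order all_algebra.
Set Implicit Arguments. Unset Strict Implicit. Unset Printing Implicit Defensive.
Import GRing.Theory.
Local Open Scope ring_scope.

Lemma widen_sum (V : zmodType) n N (F : nat -> V) :
  (n <= N)%N -> (forall i, (n <= i)%N -> F i = 0) ->
  \sum_(i < n) F i = \sum_(i < N) F i.
Proof.
move=> nN F0; rewrite (big_ord_widen N F nN) big_mkcond; apply: eq_bigr => i _.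
by case: ifP => // /negbT; rewrite -leqNgt => /F0 ->.
Qed.

Section Dmul.
Variables (R : nzRingType) (d : R -> R).
Hypothesis dD : derivation d.

Lemma dAdd a b : d (a + b) = d a + d b. Proof. by case: dD. Qed.
Lemma dMul a b : d (a * b) = a * d b + d a * b. Proof. by case: dD. Qed.
Lemma d0 : d 0 = 0.
Proof. have h := dAdd 0 0; rewrite addr0 in h. by apply: (addrI (d 0)); rewrite addr0 -h. Qed.
Lemma d1 : d 1 = 0.
Proof. have h := dMul 1 1; rewrite !mulr1 mul1r in h. by apply: (addrI (d 1)); rewrite addr0 -h. Qed.
Lemma iterD k a b : iter k d (a + b) = iter k d a + iter k d b.
Proof. by elim: k => //= k ->; rewrite dAdd. Qed.
Lemma iter0 k : iter k d 0 = 0.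
Proof. by elim: k => //= k ->; rewrite d0. Qed.
Lemma iter1 k : iter k.+1 d 1 = 0.
Proof. by elim: k => [|k /= ->]; rewrite /= ?d1 ?d0. Qed.
Lemma iter1' k : d (iter k d 1) = 0.
Proof. exact: iter1. Qed.
Lemma dMn a n : d (a *+ n) = d a *+ n.
Proof. by elim: n => [|n IH]; rewrite ?mulr0n ?d0 // !mulrS dAdd IH. Qed.

Definition dterm (p q : {poly R}) i j :=
  \sum_(k < i.+1) ((p`_i * iter k d q`_j) *+ 'C(i, k)) *: 'X^(i + j - k).

Lemma dmul_ext N M (p q : {poly R}) : (size p <= N)%N -> (size q <= M)%N ->
  dmul d p q = \sum_(i < N) \sum_(j < M) dterm p q i j.
Proof.
move=> pN qM.
have -> : dmul d p q = \sum_(i < size p) \sum_(j < size q) dterm p q i j by [].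
rewrite (widen_sum (F := fun i => \sum_(j < size q) dterm p q i j) pN); last first.
  move=> i /leq_sizeP pi; rewrite /dterm big1 // => j _; rewrite big1 // => k _.
  by rewrite pi // mul0r mul0rn scale0r.
apply: eq_bigr => i _; apply: (widen_sum (F := fun j => dterm p q i j)) => // j /leq_sizeP qj.
by rewrite /dterm big1 // => k _; rewrite qj // iter0 mulr0 mul0rn scale0r.
Qed.

Lemma dmulDl (p1 p2 q : {poly R}) : dmul d (p1 + p2) q = dmul d p1 q + dmul d p2 q.
Proof.
set N := maxn (size p1) (size p2).
rewrite (@dmul_ext N (size q)) ?leq_maxl ?leq_maxr ?size_polyD //.
rewrite (@dmul_ext N (size q)) ?leq_maxl //.
rewrite (@dmul_ext N (size q)) ?leq_maxr // -big_split; apply: eq_bigr => i _.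
rewrite -big_split; apply: eq_bigr => j _; rewrite /dterm -big_split.
by apply: eq_bigr => k _; rewrite coefD mulrDl mulrnDl scalerDl.
Qed.

Lemma dmulDr (p q1 q2 : {poly R}) : dmul d p (q1 + q2) = dmul d p q1 + dmul d p q2.
Proof.
set M := maxn (size q1) (size q2).
rewrite (@dmul_ext (size p) M) ?leq_maxl ?leq_maxr ?size_polyD //.
rewrite (@dmul_ext (size p) M) ?leq_maxl //.
rewrite (@dmul_ext (size p) M) ?leq_maxr // -big_split; apply: eq_bigr => i _.
rewrite -big_split; apply: eq_bigr => j _; rewrite /dterm -big_split.
by apply: eq_bigr => k _; rewrite coefD iterD mulrDr mulrnDl scalerDl.
Qed.

Lemma dmul0l (q : {poly R}) : dmul d 0 q = 0.
Proof. by rewrite /dmul size_poly0 big_ord0. Qed.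
Lemma dmul0r (p : {poly R}) : dmul d p 0 = 0.
Proof. by rewrite /dmul; apply: big1 => i _; rewrite size_poly0 big_ord0. Qed.

Lemma dmul_suml I (r : seq I) (P : pred I) (F : I -> {poly R}) q :
  dmul d (\sum_(i <- r | P i) F i) q = \sum_(i <- r | P i) dmul d (F i) q.
Proof. exact: (big_morph (fun p => dmul d p q) (fun a b => dmulDl a b q) (dmul0l q)). Qed.
Lemma dmul_sumr I (r : seq I) (P : pred I) (F : I -> {poly R}) p :
  dmul d p (\sum_(i <- r | P i) F i) = \sum_(i <- r | P i) dmul d p (F i).
Proof. exact: (big_morph (fun q => dmul d p q) (fun a b => dmulDr p a b) (dmul0r p)). Qed.

Lemma dmul_mono (a : R) i (b : R) j :
  dmul d (a *: 'X^i) (b *: 'X^j) =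
  \sum_(0 <= k < i.+1) ((a * iter k d b) *+ 'C(i, k)) *: 'X^(i + j - k).
Proof.
rewrite (@dmul_ext i.+1 j.+1) ?(leq_trans (size_scale_leq _ _)) ?size_polyXn //.
rewrite big_ord_recr /= big1 ?add0r => [|i' _].
  rewrite big_ord_recr /= big1 ?add0r => [|j' _].
    rewrite /dterm big_mkord; apply: eq_bigr => k _.
    by rewrite !coefZ !coefXn !eqxx !mulr1.
  rewrite /dterm big1 // => k _.
  by rewrite (coefZ b) coefXn (ltn_eqF (ltn_ord j')) mulr0 iter0 mulr0 mul0rn scale0r.
rewrite big1 // => j' _; rewrite /dterm big1 // => k _.
by rewrite (coefZ a) coefXn (ltn_eqF (ltn_ord i')) mulr0 mul0r mul0rn scale0r.
Qed.


Lemma polyC_mono (a : R) : a%:P = a *: 'X^0.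
Proof. by rewrite expr0 -alg_polyC. Qed.
Lemma X_mono : ('X : {poly R}) = 1 *: 'X^1.
Proof. by rewrite scale1r expr1. Qed.

Lemma dmul_expand (p q : {poly R}) : dmul d p q =
  \sum_(i < size p) \sum_(j < size q) dmul d (p`_i *: 'X^i) (q`_j *: 'X^j).
Proof.
rewrite -{1}(coefK p) poly_def dmul_suml; apply: eq_bigr => i _.
by rewrite -{1}(coefK q) poly_def dmul_sumr.
Qed.

Lemma dmulXC (r : R) : dmul d 'X r%:P = r%:P * 'X + (d r)%:P.
Proof.
have -> : dmul d 'X r%:P = dmul d (1 *: 'X^1) (r *: 'X^0) by rewrite -X_mono -polyC_mono.
rewrite dmul_mono !big_nat_recl //= big_geq // addr0.
by rewrite bin0 binn addn0 subn0 subnn !mul1r !mulr1n expr0 expr1 alg_polyC -mul_polyC.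
Qed.

Lemma dmulCX (r : R) : dmul d r%:P 'X = r%:P * 'X.
Proof.
have -> : dmul d r%:P 'X = dmul d (r *: 'X^0) (1 *: 'X^1) by rewrite -X_mono -polyC_mono.
rewrite dmul_mono big_nat1 /=.
by rewrite bin0 add0n subn0 mulr1 mulr1n expr1 mul_polyC.
Qed.

Lemma dmulCC (a b : R) : dmul d a%:P b%:P = (a * b)%:P.
Proof.
have -> : dmul d a%:P b%:P = dmul d (a *: 'X^0) (b *: 'X^0) by rewrite -!polyC_mono.
rewrite dmul_mono big_nat1 /=.
by rewrite mulr1n polyC_mono.
Qed.

Lemma dmul1p (p : {poly R}) : dmul d 1 p = p.
Proof.
have -> : dmul d 1 p = dmul d (1 *: 'X^0) (\sum_(j < size p) p`_j *: 'X^j).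
  by rewrite -polyC1 -polyC_mono -poly_def coefK.
rewrite dmul_sumr -[RHS]coefK poly_def.
by apply: eq_bigr => j _; rewrite dmul_mono big_nat1 /= bin0 add0n subn0 mul1r mulr1n.
Qed.

Lemma dmulp1 (p : {poly R}) : dmul d p 1 = p.
Proof.
have -> : dmul d p 1 = dmul d (\sum_(i < size p) p`_i *: 'X^i) (1 *: 'X^0).
  by rewrite -polyC1 -polyC_mono -poly_def coefK.
rewrite dmul_suml -[RHS]coefK poly_def.
apply: eq_bigr => i _; rewrite dmul_mono big_nat_recl //= bin0 mulr1 mulr1n addn0 subn0.
rewrite big1_seq ?addr0 // => k _.
by rewrite iter1' mulr0 mul0rn scale0r.
Qed.

Lemma dmulMX (s p : {poly R}) : dmul d s (p * 'X) = dmul d s p * 'X.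
Proof.
have -> : p * 'X = \sum_(j < size p) p`_j *: 'X^(j.+1).
  rewrite -{1}(coefK p) poly_def mulr_suml; apply: eq_bigr => j _.
  by rewrite -scalerAl exprSr.
rewrite [dmul d s p]dmul_expand mulr_suml -{1}(coefK s) poly_def dmul_suml.
apply: eq_bigr => i _; rewrite dmul_sumr mulr_suml; apply: eq_bigr => j _.
rewrite !dmul_mono mulr_suml; apply: eq_big_nat => k /andP [_ ki].
by rewrite -scalerAl -exprSr addnS subSn // (leq_trans (ltnSE ki)) ?leq_addr.
Qed.

Lemma pascal_sum (V : zmodType) (t : nat -> V) i :
  \sum_(0 <= k < i.+2) t k *+ 'C(i.+1, k) =
  \sum_(0 <= k < i.+1) t k *+ 'C(i, k) + \sum_(0 <= k < i.+1) t k.+1 *+ 'C(i, k).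
Proof.
rewrite big_nat_recl // bin0.
under eq_bigr => k _ do rewrite binS mulrnDr.
rewrite big_split /= [in RHS]big_nat_recl // bin0 -addrA; congr (_ + _).
congr (_ + _); rewrite big_nat_recr //= bin_small // mulr0n addr0.
by [].
Qed.

Fact Lx_key : unit. Proof. exact: tt. Qed.
Definition Lx := locked_with Lx_key (fun p : {poly R} => p * 'X + map_poly d p).

Lemma coefLx p n : (Lx p)`_n = (if n == 0%N then 0 else p`_n.-1) + d p`_n.
Proof. by rewrite /Lx unlock coefD coefMX coef_map_id0 // d0. Qed.

Lemma LxD p q : Lx (p + q) = Lx p + Lx q.
Proof.
by apply/polyP => n; rewrite [RHS]coefD !coefLx !coefD dAdd; case: (n == 0%N);
  [rewrite !add0r | rewrite addrACA].
Qed.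
Lemma Lx0 : Lx 0 = 0.
Proof. by apply/polyP => n; rewrite coefLx !coef0 d0 addr0; case: (n == 0%N). Qed.
Lemma LxN p : Lx (- p) = - Lx p.
Proof. by apply/eqP; rewrite -addr_eq0 -LxD addNr Lx0. Qed.
Lemma Lx_sum I (r : seq I) (P : pred I) (F : I -> {poly R}) :
  Lx (\sum_(i <- r | P i) F i) = \sum_(i <- r | P i) Lx (F i).
Proof. exact: (big_morph Lx LxD Lx0). Qed.

Lemma Lx_mono a i : Lx (a *: 'X^i) = a *: 'X^(i.+1) + d a *: 'X^i.
Proof.
apply/polyP => n; rewrite coefLx coefD !coefZ !coefXn.
case: n => [|n] /=.
  by case: eqP => _; rewrite ?mulr1 ?mulr0 ?d0 !add0r ?mulr0.
rewrite eqSS; case: eqP => _; case: eqP => _;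
  by rewrite ?mulr1 ?mulr0 ?d0 ?addr0 ?add0r.
Qed.

Lemma key_mono a i b j :
  dmul d (a *: 'X^(i.+1) + d a *: 'X^i) (b *: 'X^j) =
  Lx (dmul d (a *: 'X^i) (b *: 'X^j)).
Proof.
rewrite dmulDl !dmul_mono Lx_sum.
under [in RHS]eq_bigr => k _ do rewrite Lx_mono dMn dMul /= mulrnDl scalerDl.
rewrite big_split big_split /= addrA; congr (_ + _).
pose t k := (a * iter k d b) *: 'X^(i.+1 + j - k).
transitivity (\sum_(0 <= k < i.+2) t k *+ 'C(i.+1, k)).
  by apply: eq_bigr => k _; rewrite /t scalerMnl.
rewrite pascal_sum; congr (_ + _); apply: eq_big_nat => k /andP [_ ki].
  by rewrite /t scalerMnl addSn subSn // (leq_trans (ltnSE ki)) ?leq_addr.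
by rewrite /t scalerMnl addSn subSS.
Qed.

Lemma dmulLx p s : dmul d (Lx p) s = Lx (dmul d p s).
Proof.
rewrite [dmul d p s]dmul_expand Lx_sum -{1}(coefK p) poly_def Lx_sum dmul_suml.
apply: eq_bigr => i _; rewrite Lx_sum Lx_mono -{1}(coefK s) poly_def dmul_sumr.
by apply: eq_bigr => j _; rewrite key_mono.
Qed.
End Dmul.

From Stdlib Require Import Classical FunctionalExtensionality.
From mathcomp Require classical_sets.

Section Abs.
Variables (T : zmodType) (mul : T -> T -> T) (one : T).
Hypothesis mulr1' : forall t, mul t one = t.

Lemma left_ideal_ext (A B : T -> Prop) :
  (forall t, A t <-> B t) -> left_ideal mul A -> left_ideal mul B.
Proof.
move=> AB [[A0 AD AN] AM]; split; [split|].
- by apply/AB.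
- by move=> a b /AB Ha /AB Hb; apply/AB; apply: AD.
- by move=> a /AB Ha; apply/AB; apply: AN.
- by move=> s a /AB Ha; apply/AB; apply: AM.
Qed.

Lemma exists_max_left (J : T -> Prop) : left_ideal mul J -> ~ J one ->
  exists M, maximal_left_ideal mul M /\ (forall t, J t -> M t).
Proof.
move=> LJ nJ1.
pose P := fun A : T -> Prop =>
  left_ideal mul (fun t => J t \/ A t) /\ ~ (J one \/ A one).
have [A [PA Amax]] : exists A, P A /\
    forall B, classical_sets.proper A B -> ~ P B.
  apply: classical_sets.Zorn_bigcup => F FP Ftot.
  pose U := fun t => exists2 X, F X & X t.
  have pick : forall a b, J a \/ U a -> J b \/ U b -> exists Y, P Y /\
      (forall t, Y t -> U t) /\ (J a \/ Y a) /\ (J b \/ Y b).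
    move=> a b [Ja|[X FX Xa]] [Jb|[X' FX' X'b]].
    - exists (fun _ => False); split; last by split=> //; split; left.
      split; last by case.
      by apply: (left_ideal_ext _ LJ) => t; split; [left|case].
    - exists X'; split; first exact: FP.
      by split; [move=> t Xt; exists X'|split; [left|right]].
    - exists X; split; first exact: FP.
      by split; [move=> t Xt; exists X|split; [right|left]].
    - have [XX'|X'X] := Ftot X X' FX FX'.
        exists X'; split; first exact: FP.
        by split; [move=> t Xt; exists X'|split; right => //; apply: XX'].
      exists X; split; first exact: FP.
      by split; [move=> t Xt; exists X|split; right => //; apply: X'X].
  have LJ' := LJ; case: LJ' => [[J0 JD JN] JM].
  split; [split; [split|]|].
  - by left.
  - move=> a b Ha Hb; have [Y [[[[_ YD _] _] _] [YU [Ya Yb]]]] := pick a b Ha Hb.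
    by case: (YD a b Ya Yb) => [?|/YU ?]; [left|right].
  - move=> a Ha; have [Y [[[[_ _ YN] _] _] [YU [Ya _]]]] := pick a a Ha Ha.
    by case: (YN a Ya) => [?|/YU ?]; [left|right].
  - move=> s a Ha; have [Y [[[_ YM] _] [YU [Ya _]]]] := pick a a Ha Ha.
    by case: (YM s a Ya) => [?|/YU ?]; [left|right].
  - case=> [//|[X FX X1]]; have [_ nX] := FP X FX; apply: nX; by right.
have [LM nM1] := PA.
exists (fun t => J t \/ A t); split; last by move=> t Jt; left.
split=> //; first by exists one.
move=> J' LJ' MJ'; case: (classic (J' one)) => [J'1|nJ'1].
  by right => t; rewrite -(mulr1' t); case: LJ' => _; apply.
left => t J't; apply: NNPP => nMt; apply: (Amax J').
  split; first by move=> u Au; apply: MJ'; right.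
  by move=> J'A; apply: nMt; right; apply: J'A.
split.
  by apply: (left_ideal_ext _ LJ') => u; split; [right|case=> // Ju; apply: MJ'; left].
by case=> // J1; apply: nJ'1; apply: MJ'; left.
Qed.
End Abs.

Lemma cap_zero (R : nzRingType) (mul : {poly R} -> {poly R} -> {poly R})
    (M : {poly R} -> Prop) :
  (forall a b : R, mul a%:P b%:P = (a * b)%:P) -> (forall t, mul t 1 = t) ->
  simple_ring R -> left_ideal mul M -> right_ideal mul M -> Defs.proper M ->
  forall a, M a%:P -> a = 0.
Proof.
move=> mC m1 sR [[M0 MD MN] ML] [_ MR] [t nMt].
have TS : two_sided_ideal *%R (fun a => M a%:P).
  split; split.
  + split; first by rewrite polyC0.
      by move=> a b Ha Hb; rewrite polyCD; apply: MD.
    by move=> a Ha; rewrite polyCN; apply: MN.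
  + by move=> s a Ha; rewrite -mC; apply: ML.
  + split; first by rewrite polyC0.
      by move=> a b Ha Hb; rewrite polyCD; apply: MD.
    by move=> a Ha; rewrite polyCN; apply: MN.
  + by move=> s a Ha; rewrite -mC; apply: MR.
have [H|H] := sR _ TS.
- exact: H.
- exfalso; apply: nMt; rewrite -(m1 t); apply: ML; have := H 1; by rewrite polyC1.
Qed.

Lemma comm_diff (R : nzRingType) (mul : {poly R} -> {poly R} -> {poly R})
    (M : {poly R} -> Prop) g r :
  left_ideal mul M -> right_ideal mul M -> M g -> M (mul g r - mul r g).
Proof.
move=> [[_ MD MN] ML] [_ MR] Mg; apply: MD; first exact: MR.
by apply: MN; apply: ML.
Qed.

Lemma dmul_zero (R : nzRingType) (d : R -> R) : (forall r, d r = 0) ->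
  forall p q : {poly R}, dmul d p q = p * q.
Proof.
move=> dz p q.
have dD : derivation d by split=> *; rewrite !dz ?mulr0 ?mul0r ?addr0.
rewrite (dmul_expand dD).
have -> : p * q = (\sum_(i < size p) p`_i *: 'X^i) * (\sum_(j < size q) q`_j *: 'X^j).
  by rewrite -!poly_def !coefK.
rewrite mulr_suml.
apply: eq_bigr => i _; rewrite mulr_sumr; apply: eq_bigr => j _.
rewrite (dmul_mono dD) big_nat_recl // big1_seq => [|k _]; last first.
  by rewrite /= dz mulr0 mul0rn scale0r.
rewrite addr0 bin0 mulr1n subn0 /=.
rewrite -!mul_polyC mulrA -[_ * 'X^i * _]mulrA -(commr_polyXn (q`_j)%:P i).
by rewrite mulrA -polyCM -mulrA -exprD.
Qed.

Lemma diff_XC (R : nzRingType) (c r : R) :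
  ('X - c%:P) * r%:P - r%:P * ('X - c%:P) = (r * c - c * r)%:P.
Proof.
rewrite mulrBl mulrBr -!polyCM (commr_polyX r%:P) opprB addrC addrA subrK.
by rewrite polyCB.
Qed.

Unset Implicit Arguments.
Theorem lemma2p1 (R : nzRingType) (d : R -> R) :
  simple_ring R -> derivation d ->
  (left_quasi_duo (dmul d) \/ right_quasi_duo (dmul d)) ->
  is_field R /\ (forall r, d r = 0).
Proof.
move=> sR dD QD.
have dz : forall r, d r = 0.
  case: QD => [LQ|RQ] r.
  - pose J1 := fun q : {poly R} => exists p, q = p * 'X.
    have LJ1 : left_ideal (dmul d) J1.
      split; first split.
      + by exists 0; rewrite mul0r.
      + by move=> _ _ [p ->] [p' ->]; exists (p + p'); rewrite mulrDl.
      + by move=> _ [p ->]; exists (- p); rewrite mulNr.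
      + by move=> s _ [p ->]; exists (dmul d s p); rewrite dmulMX.
    have nJ1 : ~ J1 1.
      case=> p /(congr1 (fun q : {poly R} => q`_0)); rewrite coefMX coef1 /=.
      by move/eqP; rewrite oner_eq0.
    have [M [Mmax JM]] := exists_max_left (dmulp1 dD) LJ1 nJ1.
    have RM := LQ M Mmax; case: Mmax => LM PM _.
    have := comm_diff r%:P LM RM (JM _ (ex_intro _ 1 (esym (mul1r 'X)))).
    rewrite (dmulXC dD) (dmulCX dD) addrAC subrr add0r.
    exact: (cap_zero (dmulCC dD) (dmulp1 dD) sR LM RM PM).
  - pose J1 := fun q : {poly R} => exists p, q = Lx d p.
    have LJ1 : right_ideal (dmul d) J1.
      split; first split.
      + by exists 0; rewrite (Lx0 dD).
      + by move=> _ _ [p ->] [p' ->]; exists (p + p'); rewrite (LxD dD).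
      + by move=> _ [p ->]; exists (- p); rewrite (LxN dD).
      + by move=> s _ [p ->]; exists (dmul d p s); rewrite (dmulLx dD).
    have nJ1 : ~ J1 1.
      case=> p; have [->|p0] := eqVneq p 0.
        by rewrite (Lx0 dD); move/eqP; rewrite oner_eq0.
      move/(congr1 (fun q : {poly R} => q`_(size p))); rewrite (coefLx dD) coef1.
      have sp : size p != 0%N by rewrite size_poly_eq0.
      have pz : p`_(size p) = 0 by move/leq_sizeP: (leqnn (size p)); apply.
      rewrite (negbTE sp) /= pz (d0 dD) addr0.
      move/esym/eqP; rewrite -/(lead_coef p) lead_coef_eq0; apply/negP; exact: p0.
    have [M [Mmax JM]] := exists_max_left (fun t => dmul1p dD t) LJ1 nJ1.
    have LM := RQ M Mmax; case: Mmax => RM PM _.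
    have Xin : M 'X by apply: JM; exists 1; rewrite -polyC1 polyC_mono (Lx_mono dD) (d1 dD) scale0r addr0 scale1r expr1.
    have := comm_diff r%:P LM RM Xin.
    rewrite (dmulXC dD) (dmulCX dD) addrAC subrr add0r.
    exact: (cap_zero (dmulCC dD) (dmulp1 dD) sR LM RM PM).
have E : dmul d = (fun p q => p * q).
  by apply: functional_extensionality => p; apply: functional_extensionality => q;
    rewrite dmul_zero.
rewrite E in QD.
have mC : forall a b : R, (a%:P * b%:P : {poly R}) = (a * b)%:P.
  by move=> a b; rewrite polyCM.
have comm : forall c r : R, r * c = c * r.
  move=> c r; apply/eqP; rewrite -subr_eq0; apply/eqP.
  case: QD => [LQ|RQ].
  - pose J := fun q : {poly R} => exists p, q = p * ('X - c%:P).
    have LJ : left_ideal (fun p q => p * q) J.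
      split; first split.
      + by exists 0; rewrite mul0r.
      + by move=> _ _ [p ->] [p' ->]; exists (p + p'); rewrite mulrDl.
      + by move=> _ [p ->]; exists (- p); rewrite mulNr.
      + by move=> s _ [p ->]; exists (s * p); rewrite mulrA.
    have nJ : ~ J 1.
      case=> p; have [->|p0] := eqVneq p 0.
        by rewrite mul0r; move/eqP; rewrite oner_eq0.
      move=> /(congr1 (fun q : {poly R} => size q)).
      rewrite size_Mmonic ?monicXsubC // size_XsubC size_poly1.
      by rewrite addn2 /= => /eqP; rewrite eqSS eq_sym size_poly_eq0 (negbTE p0).
    have [M [Mmax JM]] := exists_max_left (fun t => mulr1 t) LJ nJ.
    have RM := LQ M Mmax; case: Mmax => LM PM _.
    have := comm_diff r%:P LM RM (JM _ (ex_intro _ 1 (esym (mul1r _)))).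
    rewrite diff_XC.
    exact: (cap_zero mC (fun t => mulr1 t) sR LM RM PM).
  - pose J := fun q : {poly R} => exists p, q = ('X - c%:P) * p.
    have LJ : right_ideal (fun p q => p * q) J.
      split; first split.
      + by exists 0; rewrite mulr0.
      + by move=> _ _ [p ->] [p' ->]; exists (p + p'); rewrite mulrDr.
      + by move=> _ [p ->]; exists (- p); rewrite mulrN.
      + by move=> s _ [p ->]; exists (p * s); rewrite mulrA.
    have nJ : ~ J 1.
      case=> p; have [->|p0] := eqVneq p 0.
        by rewrite mulr0; move/eqP; rewrite oner_eq0.
      move=> /(congr1 (fun q : {poly R} => size q)).
      rewrite size_monicM ?monicXsubC // size_XsubC size_poly1.
      by rewrite add2n /= => /eqP; rewrite eqSS eq_sym size_poly_eq0 (negbTE p0).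
    have [M [Mmax JM]] := exists_max_left (fun t => mul1r t) LJ nJ.
    have LM := RQ M Mmax; case: Mmax => RM PM _.
    have := comm_diff r%:P LM RM (JM _ (ex_intro _ 1 (esym (mulr1 _)))).
    rewrite diff_XC.
    exact: (cap_zero mC (fun t => mulr1 t) sR LM RM PM).
split=> //; split=> // a a0.
have TS : two_sided_ideal *%R (fun x => exists b, x = a * b).
  split; split.
  + split; first by exists 0; rewrite mulr0.
      by move=> _ _ [b ->] [b' ->]; exists (b + b'); rewrite mulrDr.
    by move=> _ [b ->]; exists (- b); rewrite mulrN.
  + by move=> s _ [b ->]; exists (s * b); rewrite mulrA (comm a s) mulrA.
  + split; first by exists 0; rewrite mulr0.
      by move=> _ _ [b ->] [b' ->]; exists (b + b'); rewrite mulrDr.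
    by move=> _ [b ->]; exists (- b); rewrite mulrN.
  + by move=> s _ [b ->]; exists (b * s); rewrite mulrA.
have [H|H] := sR _ TS.
- by exfalso; move: a0; rewrite (H a (ex_intro _ 1 (esym (mulr1 a)))) eqxx.
- have [b Hb] := H 1; exists b; split; first by rewrite -Hb.
  by rewrite comm -Hb.
Qed.
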